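(* Let $\mathbb{R}^n$ be endowed with the $\ell_1$ norm and $\mathbb{R}^m$ with the Euclidean norm $\|\cdot\|_2$. Let $A\in\mathbb{R}^{m\times n}$, $b\in\mathbb{R}^m$ and $Q\in\mathbb{R}^{m\times m}$ symmetric positive semidefinite be such that $\begin{bmatrix}Q^{1/2}A\\ b^{\mathsf T}A\end{bmatrix}$ has at least two different columns. Let $f(u)=\frac12\langle Qu,u\rangle+\langle b,u\rangle$. Then $v=2Q^{1/2}u^\star$ is the same for all $u^\star\in\operatorname{Argmin}_{u\in\mathrm{conv}(A)}f(u)$, and \[ \mu^\star_{f,A}\ge\frac{\Phi_v(\bar A)^2}{4}>0,\qquad \bar A:=\begin{bmatrix}Q^{1/2}A\\ 2b^{\mathsf T}A\end{bmatrix}\in\mathbb{R}^{(m+1)\times n}. \]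
   Context: $\Delta_{n-1}=\{x\in\mathbb{R}^n_+:\sum_ix_i=1\}$; a matrix is identified with the set of its columns; $\mathrm{conv}(A)=\{Ax:x\in\Delta_{n-1}\}$. With $f^\star=\min_{x\in\Delta_{n-1}}f(Ax)$ and $Z^\star=\{z\in\Delta_{n-1}:f(Az)=f^\star\}$, $\mu^\star_{f,A}=\inf_{x\in\Delta_{n-1}\setminus Z^\star}\frac{2(f(Ax)-f^\star)}{\mathrm{dist}(x,Z^\star)^2}$, where $\mathrm{dist}(x,Z^\star)=\min_{z\in Z^\star}\|x-z\|_1$. For $v\in\mathbb{R}^m$ and $\bar w=(w,w_{m+1})\in\mathbb{R}^{m+1}$ put $\|\bar w\|_v=\sqrt{\|w\|_2^2+|\langle v,w\rangle+w_{m+1}|}$, and for nonempty $F,G$ put $\mathrm{dist}_v(F,G)=\min_{\bar w\in F,\bar w'\in G}\|\bar w-\bar w'\|_v$. For $\bar A\in\mathbb{R}^{(m+1)\times n}$ with at least two different columns let $F(v)=\operatorname{Argmin}_{\bar w\in\mathrm{conv}(\bar A)}\langle(v,1),\bar w\rangle$ and $\Phi_v(\bar A)=\min\{\mathrm{dist}_v(G,\mathrm{conv}(\bar A\setminus G)):G\text{ a face of }F(v),\ \emptyset\ne G\ne\mathrm{conv}(\bar A)\}$, where $\bar A\setminus G$ denotes the columns of $\bar A$ not in $G$. *)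

(* Defs.v *)
From mathcomp Require Import all_boot all_order all_algebra.
From mathcomp Require Import boolp classical_sets reals.
Set Implicit Arguments. Unset Strict Implicit. Unset Printing Implicit Defensive.
Import Order.TTheory GRing.Theory Num.Theory.
Local Open Scope ring_scope.
Local Open Scope classical_set_scope.

Section Defs.
Variable R : realType.

Definition simplex (n : nat) : set 'cV[R]_n :=
  [set x | (forall i, 0 <= x i 0) /\ \sum_i x i 0 = 1].

Arguments simplex : clear implicits.

Definition conv (k n : nat) (A : 'M[R]_(k, n)) : set 'cV[R]_k :=
  [set y | exists2 x, simplex n x & y = A *m x].

Definition dotv (k : nat) (u w : 'cV[R]_k) : R := \sum_i u i 0 * w i 0.
Definition norm1 (k : nat) (x : 'cV[R]_k) : R := \sum_i `|x i 0|.
Definition norm2 (k : nat) (x : 'cV[R]_k) : R := Num.sqrt (\sum_i x i 0 ^+ 2).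

Definition quadf (m : nat) (Q : 'M[R]_m) (b : 'cV[R]_m) (u : 'cV[R]_m) : R :=
  2^-1 * dotv (Q *m u) u + dotv b u.

Definition argmin (k : nat) (f : 'cV[R]_k -> R) (C : set 'cV[R]_k) : set 'cV[R]_k :=
  [set u | C u /\ forall u', C u' -> f u <= f u'].

Definition fstar (m n : nat) (f : 'cV[R]_m -> R) (A : 'M[R]_(m, n)) : R :=
  inf [set r | exists2 x, simplex n x & r = f (A *m x)].

Definition Zstar (m n : nat) (f : 'cV[R]_m -> R) (A : 'M[R]_(m, n)) : set 'cV[R]_n :=
  [set z | simplex n z /\ f (A *m z) = fstar f A].

Definition dist1 (n : nat) (x : 'cV[R]_n) (Z : set 'cV[R]_n) : R :=
  inf [set r | exists2 z, Z z & r = norm1 (x - z)].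

Definition mu_star (m n : nat) (f : 'cV[R]_m -> R) (A : 'M[R]_(m, n)) : R :=
  inf [set r | exists2 x, (simplex n `\` Zstar f A) x &
        r = 2 * (f (A *m x) - fstar f A) / (dist1 x (Zstar f A)) ^+ 2].

Definition normv (m : nat) (v : 'cV[R]_m) (w : 'cV[R]_(m + 1)) : R :=
  Num.sqrt (norm2 (usubmx w) ^+ 2 + `|dotv v (usubmx w) + dsubmx w 0 0|).

Definition distv (m : nat) (v : 'cV[R]_m) (F G : set 'cV[R]_(m + 1)) : R :=
  inf [set r | exists2 w, F w & exists2 w', G w' & r = normv v (w - w')].

Definition Fv (m n : nat) (v : 'cV[R]_m) (Ab : 'M[R]_(m + 1, n)) : set 'cV[R]_(m + 1) :=
  argmin (dotv (col_mx v (1 : 'cV[R]_1))) (conv Ab).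

Definition is_face (k : nat) (C G : set 'cV[R]_k) : Prop :=
  [/\ G `<=` C,
      (forall x y (t : R), G x -> G y -> 0 <= t -> t <= 1 -> G (t *: x + (1 - t) *: y)) &
      (forall x y (t : R), C x -> C y -> 0 < t -> t < 1 ->
          G (t *: x + (1 - t) *: y) -> G x /\ G y)].

(* conv(Abar \ G): convex hull of the columns of Abar not lying in G *)
Definition conv_compl (k n : nat) (Ab : 'M[R]_(k, n)) (G : set 'cV[R]_k) : set 'cV[R]_k :=
  [set y | exists2 x, simplex n x /\ (forall i, G (col i Ab) -> x i 0 = 0) & y = Ab *m x].

Definition Phi (m n : nat) (v : 'cV[R]_m) (Ab : 'M[R]_(m + 1, n)) : R :=
  inf [set r | exists2 G, [/\ is_face (Fv v Ab) G, G <> set0 & G <> conv Ab] &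
               r = distv v G (conv_compl Ab G)].

End Defs.
Arguments simplex {R} n.

(* Submission.v *)
Require Import Defs.
From mathcomp Require Import all_boot all_order all_algebra.
From mathcomp Require Import boolp classical_sets reals.
From mathcomp Require Import topology normedtype derive.
From mathcomp Require Import ring lra.
Import Order.TTheory GRing.Theory Num.Theory.
Import numFieldNormedType.Exports.
Local Open Scope ring_scope.
Local Open Scope classical_set_scope.
Set Implicit Arguments. Unset Strict Implicit. Unset Printing Implicit Defensive.


Section Cont.
Variable R : realType.
Variable N : nat.
Implicit Types (f g : 'rV[R]_N -> R).

Lemma ct_coord j : continuous (fun y : 'rV[R]_N => y 0 j).
Proof. exact: coord_continuous. Qed.

Lemma ct_cst (c : R) : continuous (fun _ : 'rV[R]_N => c).
Proof. exact: cst_continuous. Qed.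

Lemma ct_add f g : continuous f -> continuous g -> continuous (fun y => f y + g y).
Proof. by move=> cf cg x; exact: cvgD (cf x) (cg x). Qed.

Lemma ct_mul f g : continuous f -> continuous g -> continuous (fun y => f y * g y).
Proof. by move=> cf cg x; exact: cvgM (cf x) (cg x). Qed.

Lemma ct_opp f : continuous f -> continuous (fun y => - f y).
Proof. by move=> cf x; exact: cvgN (cf x). Qed.

Lemma ct_abs f : continuous f -> continuous (fun y => `|f y|).
Proof. by move=> cf x; exact: cvg_norm (cf x). Qed.

Lemma ct_sum (I : Type) (r : seq I) (P : pred I) (F : I -> 'rV[R]_N -> R) :
  (forall i, continuous (F i)) -> continuous (fun y => \sum_(i <- r | P i) F i y).
Proof.
move=> cF; elim: r => [|i r IH].
  by under eq_fun do rewrite big_nil; apply: ct_cst.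
under eq_fun do rewrite big_cons.
case: (P i); last exact: IH.
exact: ct_add.
Qed.

Lemma closed_K (s : R) (E : 'rV[R]_N -> R) : continuous E ->
  closed [set y : 'rV[R]_N | (forall i, 0 <= y 0 i) /\ \sum_i y 0 i = s /\ E y = 0].
Proof.
move=> cE.
have -> : [set y : 'rV[R]_N | (forall i, 0 <= y 0 i) /\ \sum_i y 0 i = s /\ E y = 0] =
  (\bigcap_(i in setT) ((fun y : 'rV[R]_N => y 0 i) @^-1` [set r | 0 <= r]))
  `&` (((fun y : 'rV[R]_N => \sum_i y 0 i) @^-1` [set r | r = s])
  `&` (E @^-1` [set r | r = 0])).
  apply/seteqP; split => y /=.
    by move=> [h1 [h2 h3]]; split => //; move=> i _; apply: h1.
  by move=> [h1 [h2 h3]]; split => //; move=> i; apply: h1.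
apply: closedI; first apply: closed_bigI => i _.
  by apply: closed_comp => [y _|]; [apply: ct_coord| apply: closed_ge].
apply: closedI.
  apply: closed_comp => [y _|]; last apply: closed_eq.
  by apply: ct_sum => i; apply: ct_coord.
by apply: closed_comp => [y _|]; [apply: cE | apply: closed_eq].
Qed.

Lemma ex_min_K (s : R) (E phi : 'rV[R]_N -> R) : continuous E -> continuous phi ->
  (exists y : 'rV[R]_N, (forall i, 0 <= y 0 i) /\ \sum_i y 0 i = s /\ E y = 0) ->
  exists y : 'rV[R]_N, ((forall i, 0 <= y 0 i) /\ \sum_i y 0 i = s /\ E y = 0) /\
     forall yy : 'rV[R]_N, ((forall i, 0 <= yy 0 i) /\ \sum_i yy 0 i = s /\ E yy = 0) -> phi y <= phi yy.
Proof.
move=> cE cphi [y0 Ky0].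
set K := [set y : 'rV[R]_N | (forall i, 0 <= y 0 i) /\ \sum_i y 0 i = s /\ E y = 0].
have s0 : 0 <= s by case: Ky0 => h1 [<- _]; apply: sumr_ge0.
have bK : forall y, K y -> forall i, 0 <= y 0 i <= s.
  move=> y [h1 [h2 _]] i; rewrite h1 /= -h2.
  by rewrite (bigD1 i) //= lerDl sumr_ge0.
have cK : compact K.
  apply: bounded_closed_compact; last exact: closed_K.
  rewrite /bounded_near; exists s; split; first by rewrite realE s0.
  move=> M sM y Ky /=; apply: (le_trans _ (ltW sM)).
  rewrite (_ : `|y| = mx_norm y) // mx_normrE; apply/bigmax_leP; split => // -[i j] _ /=.
  rewrite ord1; have /andP[h1 h2] := bK y Ky j.
  by rewrite ger0_norm.
have [c /set_mem Kc cmin] := @EVT_min_rV R N phi K (ex_intro _ y0 Ky0) cK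
  (continuous_subspaceT cphi).
by exists c; split => // yy Kyy; apply: cmin; apply/mem_set.
Qed.

End Cont.


Section Basics.
Variable R : realType.

Lemma dotvE k (u w : 'cV[R]_k) : dotv u w = (u^T *m w) 0 0.
Proof. by rewrite /dotv mxE; apply: eq_bigr => i _; rewrite mxE. Qed.

Lemma dotvC k (u w : 'cV[R]_k) : dotv u w = dotv w u.
Proof. by apply: eq_bigr => i _; rewrite mulrC. Qed.

Lemma dotvDr k (u w w' : 'cV[R]_k) : dotv u (w + w') = dotv u w + dotv u w'.
Proof. by rewrite /dotv -big_split; apply: eq_bigr => i _; rewrite mxE mulrDr. Qed.

Lemma dotvZr k (u w : 'cV[R]_k) a : dotv u (a *: w) = a * dotv u w.
Proof. by rewrite /dotv mulr_sumr; apply: eq_bigr => i _; rewrite mxE mulrCA. Qed.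

Lemma dotvNr k (u w : 'cV[R]_k) : dotv u (- w) = - dotv u w.
Proof. by rewrite -scaleN1r dotvZr mulN1r. Qed.

Lemma dotvBr k (u w w' : 'cV[R]_k) : dotv u (w - w') = dotv u w - dotv u w'.
Proof. by rewrite dotvDr dotvNr. Qed.

Lemma dotvDl k (u u' w : 'cV[R]_k) : dotv (u + u') w = dotv u w + dotv u' w.
Proof. by rewrite dotvC dotvDr !(dotvC w). Qed.

Lemma dotvZl k (u w : 'cV[R]_k) a : dotv (a *: u) w = a * dotv u w.
Proof. by rewrite dotvC dotvZr dotvC. Qed.

Lemma dotvBl k (u u' w : 'cV[R]_k) : dotv (u - u') w = dotv u w - dotv u' w.
Proof. by rewrite dotvC dotvBr !(dotvC w). Qed.

Lemma dotv0r k (u : 'cV[R]_k) : dotv u 0 = 0.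
Proof. by rewrite /dotv big1 // => i _; rewrite mxE mulr0. Qed.

Lemma dotvvge0 k (u : 'cV[R]_k) : 0 <= dotv u u.
Proof. by apply: sumr_ge0 => i _; rewrite -expr2 sqr_ge0. Qed.

Lemma dotvv_eq0 k (u : 'cV[R]_k) : dotv u u = 0 -> u = 0.
Proof.
move=> /eqP; rewrite psumr_eq0; last by move=> i _; rewrite -expr2 sqr_ge0.
move=> /allP H; apply/matrixP => i j; rewrite ord1 mxE.
by have := H i (mem_index_enum _); rewrite -expr2 sqrf_eq0 => /eqP.
Qed.

Lemma norm2_sq k (u : 'cV[R]_k) : norm2 u ^+ 2 = dotv u u.
Proof.
rewrite /norm2 sqr_sqrtr; last by apply: sumr_ge0 => i _; rewrite sqr_ge0.
by apply: eq_bigr => i _; rewrite expr2.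
Qed.

Lemma dotv_col_mx k1 k2 (a p : 'cV[R]_k1) (c q : 'cV[R]_k2) :
  dotv (col_mx a c) (col_mx p q) = dotv a p + dotv c q.
Proof.
rewrite /dotv big_split_ord /=; congr (_ + _); apply: eq_bigr => i _.
  by rewrite !col_mxEu.
by rewrite !col_mxEd.
Qed.

Lemma dotv1 (u : 'cV[R]_1) : dotv (1 : 'cV[R]_1) u = u 0 0.
Proof. by rewrite /dotv big_ord1 mxE /= mul1r. Qed.

Lemma sqrt_le_mul (t X Y : R) : 0 <= t <= 1 -> 0 <= X -> 0 <= Y ->
  t * Num.sqrt (X + Y) <= Num.sqrt (t ^+ 2 * X + t * Y).
Proof.
move=> /andP[t0 t1] X0 Y0.
have -> : t * Num.sqrt (X + Y) = Num.sqrt (t ^+ 2 * (X + Y)).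
  by rewrite sqrtrM ?sqr_ge0 // sqrtr_sqr ger0_norm.
rewrite ler_sqrt; last by rewrite addr_ge0 // mulr_ge0 // sqr_ge0.
rewrite mulrDr lerD2l expr2 -mulrA ler_piMl //; first by rewrite mulr_ge0.
Qed.

Lemma usubmxZ k1 k2 (a : R) (w : 'cV[R]_(k1 + k2)) : usubmx (a *: w) = a *: usubmx w.
Proof. by apply/matrixP => i j; rewrite !mxE. Qed.
Lemma dsubmxZ k1 k2 (a : R) (w : 'cV[R]_(k1 + k2)) : dsubmx (a *: w) = a *: dsubmx w.
Proof. by apply/matrixP => i j; rewrite !mxE. Qed.

Lemma normv_ge0 m (v : 'cV[R]_m) w : 0 <= normv v w.
Proof. exact: sqrtr_ge0. Qed.

Lemma normvZ m (v : 'cV[R]_m) (w : 'cV[R]_(m + 1)) (t : R) : 0 <= t <= 1 ->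
  t * normv v w <= normv v (t *: w).
Proof.
move=> t01; have /andP[t0 _] := t01.
rewrite /normv usubmxZ dsubmxZ !norm2_sq dotvZl dotvZr dotvZr.
have -> : (t *: dsubmx w) 0 0 = t * dsubmx w 0 0 by rewrite mxE.
rewrite -mulrDr normrM.
rewrite (ger0_norm t0) mulrA -expr2.
by apply: sqrt_le_mul => //; apply: dotvvge0.
Qed.

Lemma normvN m (v : 'cV[R]_m) (w : 'cV[R]_(m + 1)) : normv v (- w) = normv v w.
Proof.
have uN : usubmx (- w) = - usubmx w by apply/matrixP => i j; rewrite !mxE.
have dN : dsubmx (- w) = - dsubmx w by apply/matrixP => i j; rewrite !mxE.
rewrite /normv uN dN !norm2_sq.
have -> : dotv (- usubmx w) (- usubmx w) = dotv (usubmx w) (usubmx w).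
  by rewrite dotvNr dotvC dotvNr opprK.
by rewrite dotvNr mxE -opprD normrN.
Qed.

Lemma simplex_conv n (x y : 'cV[R]_n) t : simplex n x -> simplex n y -> 0 <= t <= 1 ->
  simplex n (t *: x + (1 - t) *: y).
Proof.
move=> [x0 x1] [y0 y1] /andP[t0 t1]; split.
  move=> i; rewrite !mxE addr_ge0 // mulr_ge0 // ?subr_ge0 //.
under eq_bigr do rewrite !mxE.
by rewrite big_split /= -!mulr_sumr x1 y1 !mulr1 addrC subrK.
Qed.

Lemma conv_conv k n (M : 'M[R]_(k, n)) y1 y2 t : conv M y1 -> conv M y2 -> 0 <= t <= 1 ->
  conv M (t *: y1 + (1 - t) *: y2).
Proof.
move=> [x1 Hx1 ->] [x2 Hx2 ->] t01; exists (t *: x1 + (1 - t) *: x2).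
  exact: simplex_conv.
by rewrite mulmxDr !scalemxAr.
Qed.

Definition ev n (i : 'I_n) : 'cV[R]_n := delta_mx i 0.

Lemma simplex_ev n (i : 'I_n) : simplex n (ev i).
Proof.
split; first by move=> j; rewrite mxE; case: (_ == _); case: (_ == _).
rewrite (bigD1 i) //= big1 ?addr0; first by rewrite mxE !eqxx.
by move=> j /negbTE ji; rewrite mxE ji.
Qed.

Lemma mul_ev k n (M : 'M[R]_(k, n)) i : M *m ev i = col i M.
Proof. by rewrite colE. Qed.

Lemma simplex_le1 n (x : 'cV[R]_n) i : simplex n x -> x i 0 <= 1.
Proof.
move=> [x0 <-]; rewrite (bigD1 i) //= lerDl sumr_ge0 // => j _; exact: x0.
Qed.

Lemma norm1_ge0 n (x : 'cV[R]_n) : 0 <= norm1 x.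
Proof. by apply: sumr_ge0 => i _. Qed.

Lemma norm1D n (x y : 'cV[R]_n) : norm1 (x + y) <= norm1 x + norm1 y.
Proof.
rewrite /norm1 -big_split /=; apply: ler_sum => i _; rewrite mxE; exact: ler_normD.
Qed.

Lemma norm1Z n (x : 'cV[R]_n) a : norm1 (a *: x) = `|a| * norm1 x.
Proof. by rewrite /norm1 mulr_sumr; apply: eq_bigr => i _; rewrite mxE normrM. Qed.

Lemma norm1_simplex n (x : 'cV[R]_n) : simplex n x -> norm1 x = 1.
Proof. by move=> [x0 <-]; apply: eq_bigr => i _; rewrite ger0_norm //; apply: x0. Qed.

Lemma norm1N n (x : 'cV[R]_n) : norm1 (- x) = norm1 x.
Proof. by rewrite -scaleN1r norm1Z normrN normr1 mul1r. Qed.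

Lemma inf_ge0 (E : set R) : (forall r, E r -> 0 <= r) -> 0 <= inf E.
Proof.
move=> H; have [[r Er]|] := pselect (E !=set0).
  by apply: lb_le_inf; [exists r | move=> y /H].
move=> /set0P/negP; rewrite negbK => /eqP ->; rewrite inf0.
done.
Qed.

Lemma inf_le_elt (E : set R) r : (forall r, E r -> 0 <= r) -> E r -> inf E <= r.
Proof. by move=> H Er; apply: ge_inf => //; exists 0 => y /H. Qed.

Lemma inf_min (E : set R) r : E r -> (forall s, E s -> r <= s) -> inf E = r.
Proof.
move=> Er H; apply/eqP; rewrite eq_le; apply/andP; split.
  by apply: ge_inf => //; exists r.
by apply: lb_le_inf => //; exists r.
Qed.

Lemma mxBE k l (M N : 'M[R]_(k, l)) i j : (M - N) i j = M i j - N i j.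
Proof. by rewrite !mxE. Qed.
Lemma mxDE k l (M N : 'M[R]_(k, l)) i j : (M + N) i j = M i j + N i j.
Proof. by rewrite !mxE. Qed.
Lemma mxZE k l (M : 'M[R]_(k, l)) a i j : (a *: M) i j = a * M i j.
Proof. by rewrite !mxE. Qed.
Lemma mxNE k l (M : 'M[R]_(k, l)) i j : (- M) i j = - M i j.
Proof. by rewrite !mxE. Qed.

End Basics.
Arguments ev {R n} i.


Section ContMx.
Variable R : realType.

Lemma ct_mx N k (M : 'M[R]_(k, N)) i : continuous (fun y : 'rV[R]_N => (M *m y^T) i 0).
Proof.
have -> : (fun y : 'rV[R]_N => (M *m y^T) i 0) = (fun y => \sum_j M i j * y 0 j).
  by apply: funext => y; rewrite mxE; apply: eq_bigr => j _; rewrite mxE.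
by apply: ct_sum => j; apply: ct_mul; [apply: ct_cst | apply: ct_coord].
Qed.

Lemma ct_dotv N k (M M' : 'M[R]_(k, N)) :
  continuous (fun y : 'rV[R]_N => dotv (M *m y^T) (M' *m y^T)).
Proof. by apply: ct_sum => i; apply: ct_mul; apply: ct_mx. Qed.

Lemma simplexT n (y : 'rV[R]_n) :
  simplex n y^T <-> ((forall i, 0 <= y 0 i) /\ \sum_i y 0 i = 1).
Proof.
rewrite /simplex /=.
have E : forall i, y^T i 0 = y 0 i by move=> i; rewrite mxE.
split => -[h1 h2]; split.
- by move=> i; rewrite -E.
- by rewrite -h2; apply: eq_bigr => i _; rewrite E.
- by move=> i; rewrite E.
- by rewrite -h2; apply: eq_bigr => i _; rewrite E.
Qed.

Lemma ex_min_simplex n (E phi : 'cV[R]_n -> R) :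
  continuous (fun y : 'rV[R]_n => E y^T) -> continuous (fun y : 'rV[R]_n => phi y^T) ->
  (exists x, simplex n x /\ E x = 0) ->
  exists x, (simplex n x /\ E x = 0) /\ forall x', simplex n x' /\ E x' = 0 -> phi x <= phi x'.
Proof.
move=> cE cphi [x [sx Ex]].
have [y [[y0 [y1 Ey]] ymin]] := ex_min_K cE cphi (ex_intro _ x^T
  (let: conj a b := proj1 (simplexT x^T) (eq_ind_r (simplex n) sx (trmxK x)) in conj a (conj b (eq_ind_r (fun z => E z = 0) Ex (trmxK x))))).
exists y^T; split; first by split => //; apply/simplexT.
move=> x' [sx' Ex']; rewrite -(trmxK x'); apply: ymin.
have := proj1 (simplexT x'^T); rewrite trmxK => /(_ sx') [a b].
by split => //; split => //; rewrite trmxK.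
Qed.

End ContMx.


Section Quad.
Variables (R : realType) (m n : nat) (P : 'M[R]_(m, n)) (B : 'M[R]_(1, n)).

Definition Ab : 'M[R]_(m + 1, n) := col_mx P (2%:R *: B).
Implicit Types x y z : 'cV[R]_n.
Definition hq (x : 'cV[R]_n) : R := 2^-1 * dotv (P *m x) (P *m x) + (B *m x) 0 0.

Lemma Ab_mul x : Ab *m x = col_mx (P *m x) (2%:R *: (B *m x)).
Proof. by rewrite /Ab mul_col_mx scalemxAl. Qed.

Lemma Ab_inj x y : Ab *m x = Ab *m y -> P *m x = P *m y /\ B *m x = B *m y.
Proof.
rewrite !Ab_mul => /eq_col_mx [-> h]; split => //.
apply/matrixP => i j; have := congr1 (fun M : 'M[R]_1 => M i j) h; rewrite !mxE.
by move/mulfI; apply; rewrite pnatr_eq0.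
Qed.

Lemma hq_Ab x y : Ab *m x = Ab *m y -> hq x = hq y.
Proof. by move/Ab_inj => [h1 h2]; rewrite /hq h1 h2. Qed.

Lemma ct_hq : continuous (fun y : 'rV[R]_n => hq y^T).
Proof.
apply: ct_add; first by apply: ct_mul; [apply: ct_cst | apply: ct_dotv].
exact: ct_mx.
Qed.

Lemma ex_min_hq : (exists x, simplex n x) ->
  exists x0, simplex n x0 /\ forall x, simplex n x -> hq x0 <= hq x.
Proof.
move=> [x1 sx1].
have [x [[sx _] xmin]] := @ex_min_simplex R n (fun _ => 0) hq
  (@ct_cst R n 0) ct_hq (ex_intro _ x1 (conj sx1 erefl)).
by exists x; split => // x' sx'; apply: xmin.
Qed.

Lemma dotvNl k (u w : 'cV[R]_k) : dotv (- u) w = - dotv u w.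
Proof. by rewrite dotvC dotvNr dotvC. Qed.

Lemma hq_conv x y t : hq (t *: x + (1 - t) *: y) =
  t * hq x + (1 - t) * hq y - t * (1 - t) / 2%:R * dotv (P *m x - P *m y) (P *m x - P *m y).
Proof.
rewrite /hq mulmxDr !mulmxDr -!scalemxAr !(dotvDl, dotvDr, dotvZl, dotvZr, dotvNl, dotvNr).
rewrite !mxE !(dotvC (P *m y) (P *m x)).
by field; rewrite ?pnatr_eq0.
Qed.

Lemma hq_conv_le x y : simplex n x -> simplex n y ->
  (forall z, simplex n z -> hq y <= hq z) -> hq x <= hq y -> P *m x = P *m y.
Proof.
move=> sx sy ymin hxy.
have hmid := ymin _ (simplex_conv sx sy (t:=2^-1) _).
rewrite hq_conv in hmid.
have H0 : dotv (P *m x - P *m y) (P *m x - P *m y) = 0.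
  apply/eqP; rewrite eq_le dotvvge0 andbT.
  have t01 : 0 <= (2^-1 : R) <= 1.
    by apply/andP; split; lra.
  move: (hmid t01); set D := dotv _ _ => h.
  have : 2^-1 * (1 - 2^-1) / 2%:R * D <= 0 by lra.
  rewrite pmulr_rle0 //; lra.
by move/dotvv_eq0: H0 => /eqP; rewrite subr_eq0 => /eqP.
Qed.

End Quad.


Section Opt.
Variables (R : realType) (m n : nat) (P : 'M[R]_(m, n)) (B : 'M[R]_(1, n)).
Variable x0 : 'cV[R]_n.
Hypothesis sx0 : simplex n x0.
Hypothesis x0min : forall x, simplex n x -> hq P B x0 <= hq P B x.
Implicit Types x y z : 'cV[R]_n.

Local Notation hq := (hq P B).
Local Notation Ab := (Ab P B).

Definition grow : 'rV[R]_n := (P *m x0)^T *m P + B.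
Definition gd x : R := (grow *m x) 0 0.
Definition vv : 'cV[R]_m := 2%:R *: (P *m x0).
Definition Lv (y : 'cV[R]_(m + 1)) : R := dotv (col_mx vv (1 : 'cV[R]_1)) y.

Lemma gdE x : gd x = dotv (P *m x0) (P *m x) + (B *m x) 0 0.
Proof. by rewrite /gd mulmxDl mxE -mulmxA -dotvE. Qed.

Lemma gdD x y : gd (x + y) = gd x + gd y.
Proof. by rewrite /gd mulmxDr mxE. Qed.
Lemma gdZ x a : gd (a *: x) = a * gd x.
Proof. by rewrite /gd -scalemxAr mxE. Qed.
Lemma gdN x : gd (- x) = - gd x.
Proof. by rewrite -scaleN1r gdZ mulN1r. Qed.
Lemma gdB x y : gd (x - y) = gd x - gd y.
Proof. by rewrite gdD gdN. Qed.
Lemma gd_sum x : gd x = \sum_i grow 0 i * x i 0.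
Proof. by rewrite /gd mxE. Qed.
Lemma gd_ev i : gd (ev i) = grow 0 i.
Proof. by rewrite /gd mul_ev mxE. Qed.

Lemma LvD (w w' : 'cV[R]_(m + 1)) : Lv (w + w') = Lv w + Lv w'.
Proof. exact: dotvDr. Qed.
Lemma LvZ (w : 'cV[R]_(m + 1)) a : Lv (a *: w) = a * Lv w.
Proof. exact: dotvZr. Qed.
Lemma LvN (w : 'cV[R]_(m + 1)) : Lv (- w) = - Lv w.
Proof. exact: dotvNr. Qed.
Lemma LvB (w w' : 'cV[R]_(m + 1)) : Lv (w - w') = Lv w - Lv w'.
Proof. exact: dotvBr. Qed.

Lemma Lv_Ab x : Lv (Ab *m x) = 2%:R * gd x.
Proof.
rewrite /Lv Ab_mul dotv_col_mx dotv1 gdE /vv dotvZl mxE mulrDr.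
done.
Qed.

Lemma hq_gd x : hq x - hq x0 =
  2^-1 * dotv (P *m x - P *m x0) (P *m x - P *m x0) + (gd x - gd x0).
Proof.
rewrite !gdE /Submission.hq !(dotvDl, dotvDr, dotvNl, dotvNr) (dotvC (P *m x) (P *m x0)).
by field; rewrite ?pnatr_eq0.
Qed.

Lemma gd_min x : simplex n x -> gd x0 <= gd x.
Proof.
move=> sx; rewrite leNgt; apply/negP => Hlt.
set D := gd x0 - gd x.
have D0 : 0 < D by rewrite /D subr_gt0.
set K := dotv (P *m x - P *m x0) (P *m x - P *m x0).
have K0 : 0 <= K by apply: dotvvge0.
set t := D / (K + D).
have KD0 : 0 < K + D by lra.
have t0 : 0 < t by apply: divr_gt0.
have t1 : t <= 1 by rewrite /t ler_pdivrMr // mul1r; lra.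
have t01 : 0 <= t <= 1 by rewrite (ltW t0) t1.
have sxt := simplex_conv sx sx0 t01.
have := x0min sxt.
rewrite -subr_ge0 hq_gd.
have -> : P *m (t *: x + (1 - t) *: x0) - P *m x0 = t *: (P *m x - P *m x0).
  by rewrite mulmxDr -!scalemxAr; apply/matrixP => i j; rewrite !mxE; ring.
rewrite gdD !gdZ dotvZl dotvZr -/K.
have e : t * (K + D) = D by rewrite /t divfK // gt_eqF.
move=> H.
have H2 : 0 <= t * (t * K / 2%:R - D) by move: H; rewrite /D; lra.
move: H2; rewrite pmulr_rge0 // => H3.
nra.
Qed.



Lemma Zs_prop z : simplex n z -> hq z = hq x0 ->
  [/\ P *m z = P *m x0, B *m z = B *m x0, Ab *m z = Ab *m x0 & gd z = gd x0].
Proof.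
move=> sz hz.
have Pz : P *m z = P *m x0 by apply: (hq_conv_le sz sx0 x0min); rewrite hz.
have Bz : B *m z = B *m x0.
  apply/matrixP => i j; rewrite !ord1.
  by move: hz; rewrite /Submission.hq Pz => /addrI.
split => //; first by rewrite !Ab_mul Pz Bz.
by rewrite !gdE Pz Bz.
Qed.

Lemma Lv_col (a : 'cV[R]_m) (c : 'cV[R]_1) : Lv (col_mx a c) = dotv vv a + c 0 0.
Proof. by rewrite /Lv dotv_col_mx dotv1. Qed.

Lemma normv_sq (w : 'cV[R]_(m + 1)) : normv vv w ^+ 2 = dotv (usubmx w) (usubmx w) + `|Lv w|.
Proof.
rewrite /normv sqr_sqrtr; last by rewrite addr_ge0 // sqr_ge0.
rewrite norm2_sq; congr (_ + `|_|).
by rewrite -[in RHS](vsubmxK w) Lv_col.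
Qed.

Lemma normv_key x z : simplex n x -> simplex n z -> hq z = hq x0 ->
  normv vv (Ab *m x - Ab *m z) ^+ 2 = 2%:R * (hq x - hq x0).
Proof.
move=> sx sz hz; have [Pz Bz Abz gdz] := Zs_prop sz hz.
rewrite normv_sq -mulmxBr Lv_Ab gdB Ab_mul col_mxKu mulmxBr Pz gdz.
rewrite ger0_norm; last by rewrite mulr_ge0 // subr_ge0 gd_min.
by rewrite hq_gd; field; rewrite ?pnatr_eq0.
Qed.

Lemma Lv_conv (y : 'cV[R]_(m + 1)) : conv Ab y -> 2%:R * gd x0 <= Lv y.
Proof. by move=> [x sx ->]; rewrite Lv_Ab ler_pM2l // gd_min. Qed.

Lemma Fv_iff (y : 'cV[R]_(m + 1)) : Fv vv Ab y <-> conv Ab y /\ Lv y = 2%:R * gd x0.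
Proof.
split.
  move=> [cy ymin]; split => //; apply/eqP; rewrite eq_le Lv_conv // andbT.
  have := ymin (Ab *m x0) (ex_intro2 _ _ x0 sx0 erefl).
  by rewrite -/(Lv y) -/(Lv _) Lv_Ab.
move=> [cy Ly]; split => // y' cy'.
by rewrite -/(Lv y) -/(Lv _) Ly Lv_conv.
Qed.

Lemma gd_nonneg (w : 'cV[R]_n) : (forall i, 0 <= w i 0) -> (\sum_i w i 0) * gd x0 <= gd w.
Proof.
move=> w0; rewrite [gd w]gd_sum mulr_suml; apply: ler_sum => i _.
rewrite mulrC ler_wpM2r // -gd_ev; apply: gd_min; exact: simplex_ev.
Qed.

End Opt.


Section Conv3.
Variable R : realType.
Lemma conv_comb k n (M : 'M[R]_(k, n)) y1 y2 t : conv M y1 -> conv M y2 -> 0 <= t <= 1 ->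
  conv M (t *: y1 + (1 - t) *: y2).
Proof. exact: conv_conv. Qed.

Lemma conv3 k n (M : 'M[R]_(k, n)) y1 y2 y3 a b : conv M y1 -> conv M y2 -> conv M y3 ->
  0 <= a -> 0 <= b -> a + b <= 1 ->
  conv M (a *: y1 + b *: y2 + (1 - a - b) *: y3).
Proof.
move=> c1 c2 c3 a0 b0 ab1.
have [ab0|abpos] := eqVneq (a + b) 0.
  have a00 : a = 0 by lra.
  have b00 : b = 0 by lra.
  by rewrite a00 b00 !scale0r !add0r !subr0 scale1r.
have abp : 0 < a + b by rewrite lt_def abpos addr_ge0.
set y12 := (a / (a + b)) *: y1 + (1 - a / (a + b)) *: y2.
have c12 : conv M y12.
  apply: conv_conv => //; apply/andP; split; first by rewrite divr_ge0 // ltW.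
  by rewrite ler_pdivrMr // mul1r lerDl.
have t01 : 0 <= a + b <= 1 by rewrite (ltW abp) ab1.
have := conv_conv c12 c3 t01.
have -> : (a + b) *: y12 + (1 - (a + b)) *: y3 = a *: y1 + b *: y2 + (1 - a - b) *: y3.
  apply/matrixP => i j; rewrite /y12 !mxE; field.
  by rewrite abpos.
done.
Qed.
End Conv3.

Section Face.
Variables (R : realType) (m n : nat) (P : 'M[R]_(m, n)) (B : 'M[R]_(1, n)).
Variable x0 : 'cV[R]_n.
Hypothesis sx0 : simplex n x0.
Hypothesis x0min : forall x, simplex n x -> hq P B x0 <= hq P B x.
Local Notation hq := (hq P B).
Local Notation Ab := (Ab P B).
Local Notation Lv := (Submission.Lv P x0).
Local Notation vv := (vv P x0).
Local Notation gd := (gd P B x0).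
Implicit Types y q : 'cV[R]_(m + 1).

Definition Gq q := [set y | conv Ab y /\ exists2 e, 0 < e & conv Ab (q + e *: (q - y))].

Lemma Gq_q q : conv Ab q -> Gq q q.
Proof. by move=> cq; split => //; exists 1 => //; rewrite subrr scaler0 addr0. Qed.

Lemma Gq_Fv q : Fv vv Ab q -> Gq q `<=` Fv vv Ab.
Proof.
move=> /(Fv_iff sx0 x0min) [cq Lq] y [cy [e e0 cr]].
apply/(Fv_iff sx0 x0min); split => //.
have h1 := Lv_conv sx0 x0min cy.
have := Lv_conv sx0 x0min cr.
rewrite LvD LvZ LvB Lq => h2.
have : e * (2%:R * gd x0 - Lv y) >= 0 by lra.
rewrite pmulr_rge0 // subr_ge0 => h3.
by apply/eqP; rewrite eq_le h1 h3.
Qed.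

Lemma Gq_convex q y1 y2 t : Gq q y1 -> Gq q y2 -> 0 <= t -> t <= 1 ->
  Gq q (t *: y1 + (1 - t) *: y2).
Proof.
move=> [c1 [e1 e10 r1]] [c2 [e2 e20 r2]] t0 t1.
have cq : conv Ab q.
  have := conv_conv r1 c1 (t := (1 + e1)^-1) _.
  have -> : (1 + e1)^-1 *: (q + e1 *: (q - y1)) + (1 - (1 + e1)^-1) *: y1 = q.
    apply/matrixP => i j; rewrite !mxE; field; lra.
  apply; apply/andP; split; first by rewrite invr_ge0; lra.
  by rewrite invf_le1; lra.
split; first by apply: conv_conv => //; rewrite t0 t1.
set e := Num.min e1 e2.
have e0 : 0 < e by rewrite lt_min e10 e20.
exists e => //.
have ee1 : e <= e1 by rewrite ge_min lexx.
have ee2 : e <= e2 by rewrite ge_min lexx orbT.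
have aux : forall yk ek, 0 < ek -> e <= ek -> conv Ab (q + ek *: (q - yk)) ->
    conv Ab (q + e *: (q - yk)).
  move=> yk ek ek0 eek crk.
  have := conv_conv crk cq (t := e / ek) _.
  have -> : e / ek *: (q + ek *: (q - yk)) + (1 - e / ek) *: q = q + e *: (q - yk).
    apply/matrixP => i j; rewrite !mxE; field; lra.
  apply; apply/andP; split; first by rewrite divr_ge0 // ltW.
  by rewrite ler_pdivrMr // mul1r.
have := conv_conv (aux _ _ e10 ee1 r1) (aux _ _ e20 ee2 r2) (t := t) _.
have -> : t *: (q + e *: (q - y1)) + (1 - t) *: (q + e *: (q - y2)) =
   q + e *: (q - (t *: y1 + (1 - t) *: y2)).
  by apply/matrixP => i j; rewrite !mxE; ring.
by apply; rewrite t0 t1.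
Qed.

Lemma Gq_ext1 q y1 y2 t : conv Ab y1 -> conv Ab y2 -> 0 < t -> t < 1 ->
  Gq q (t *: y1 + (1 - t) *: y2) -> Gq q y1.
Proof.
move=> c1 c2 t0 t1 [cy [e e0 cr]].
have cq : conv Ab q.
  have := conv_conv cr cy (t := (1 + e)^-1) _.
  have -> : (1 + e)^-1 *: (q + e *: (q - (t *: y1 + (1 - t) *: y2)))
     + (1 - (1 + e)^-1) *: (t *: y1 + (1 - t) *: y2) = q.
    apply/matrixP => i j; rewrite !mxE; field; lra.
  apply; apply/andP; split; first by rewrite invr_ge0; lra.
  by rewrite invf_le1; lra.
split => //; exists (t * e / (1 + e)).
  by apply: divr_gt0; [apply: mulr_gt0|lra].
have := conv3 cr c2 cq (a := (1 + e)^-1) (b := e * (1 - t) / (1 + e)) _ _ _.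
have -> : (1 + e)^-1 *: (q + e *: (q - (t *: y1 + (1 - t) *: y2))) +
   e * (1 - t) / (1 + e) *: y2 + (1 - (1 + e)^-1 - e * (1 - t) / (1 + e)) *: q =
   q + t * e / (1 + e) *: (q - y1).
  apply/matrixP => i j; rewrite !mxE; field; lra.
apply; first by rewrite invr_ge0; lra.
  by apply: divr_ge0; [apply: mulr_ge0; lra | lra].
have -> : (1 + e)^-1 + e * (1 - t) / (1 + e) = (1 + e * (1 - t)) / (1 + e).
  by field; lra.
by rewrite ler_pdivrMr ?mul1r; nra.
Qed.

Lemma Gq_face q : Fv vv Ab q -> is_face (Fv vv Ab) (Gq q).
Proof.
move=> Fq; split.
- exact: Gq_Fv.
- by move=> y1 y2 t G1 G2 t0 t1; apply: Gq_convex.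
- move=> y1 y2 t F1 F2 t0 t1 G; split.
    by apply: (Gq_ext1 _ _ t0 t1 G); [case: F1 | case: F2].
  apply: (Gq_ext1 (y2 := y1) (t := 1 - t)); [by case: F2 | by case: F1 | lra | lra |].
  have -> : (1 - t) *: y2 + (1 - (1 - t)) *: y1 = t *: y1 + (1 - t) *: y2.
    by apply/matrixP => i j; rewrite !mxE; ring.
  done.
Qed.

End Face.


Section MaxFacts.
Variable R : realType.
Lemma max_sub (t : R) : Num.max t 0 - Num.max (- t) 0 = t.
Proof. by case: (leP t 0) => h; case: (leP (- t) 0) => h'; lra. Qed.
Lemma max_add (t : R) : Num.max t 0 + Num.max (- t) 0 = `|t|.
Proof.
case: (leP 0 t) => h0; [rewrite ger0_norm // | rewrite ltr0_norm //];
by case: (leP t 0) => h; case: (leP (- t) 0) => h'; lra.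
Qed.
Lemma max_ge0 (t : R) : 0 <= Num.max t 0.
Proof. by rewrite le_max lexx orbT. Qed.

Lemma norm1_nonneg n (w : 'cV[R]_n) : (forall i, 0 <= w i 0) -> norm1 w = \sum_i w i 0.
Proof. by move=> w0; apply: eq_bigr => i _; rewrite ger0_norm. Qed.
End MaxFacts.

Section Constr.
Variables (R : realType) (m n : nat) (P : 'M[R]_(m, n)) (B : 'M[R]_(1, n)).
Variable x0 : 'cV[R]_n.
Hypothesis sx0 : simplex n x0.
Hypothesis x0min : forall x, simplex n x -> hq P B x0 <= hq P B x.
Local Notation hq := (hq P B).
Local Notation Ab := (Ab P B).
Local Notation Lv := (Submission.Lv P x0).
Local Notation vv := (vv P x0).
Local Notation gd := (gd P B x0).

Variables x z : 'cV[R]_n.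
Hypothesis sx : simplex n x.
Hypothesis sz : simplex n z.
Hypothesis hz : hq z = hq x0.
Hypothesis xnZ : hq x <> hq x0.
Hypothesis zmin : forall z', simplex n z' -> hq z' = hq x0 -> norm1 (x - z) <= norm1 (x - z').

Definition dpv : 'cV[R]_n := \matrix_(i, j) Num.max (x i j - z i j) 0.
Definition dnv : 'cV[R]_n := \matrix_(i, j) Num.max (z i j - x i j) 0.
Definition th : R := \sum_i dpv i 0.

Lemma dpv_ge0 i : 0 <= dpv i 0. Proof. by rewrite mxE max_ge0. Qed.
Lemma dnv_ge0 i : 0 <= dnv i 0. Proof. by rewrite mxE max_ge0. Qed.

Lemma xz_split : x - z = dpv - dnv.
Proof. by apply/matrixP => i j; rewrite !mxE -[z i j - x i j]opprB max_sub. Qed.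

Lemma norm1_xz : norm1 (x - z) = th + \sum_i dnv i 0.
Proof.
rewrite /norm1 /th -big_split; apply: eq_bigr => i _.
rewrite !mxE -[z i 0 - x i 0]opprB; exact/esym/max_add.
Qed.

Lemma sum_dnv : \sum_i dnv i 0 = th.
Proof.
have : \sum_i (x - z) i 0 = 0.
  under eq_bigr do rewrite !mxE.
  by rewrite sumrB; case: sx => _ ->; case: sz => _ ->; rewrite subrr.
have e : \sum_i (dpv - dnv) i 0 = th - \sum_i dnv i 0.
  by rewrite /th -sumrB; apply: eq_bigr => i _; rewrite !mxE.
by rewrite xz_split e => /eqP; rewrite subr_eq0 => /eqP.
Qed.

Lemma dnv_le_z i : dnv i 0 <= z i 0.
Proof.
rewrite mxE ge_max; case: sz => z0 _; case: sx => xp _.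
by rewrite z0 andbT lerBlDr lerDl.
Qed.

Lemma dpv_le_x i : dpv i 0 <= x i 0.
Proof.
rewrite mxE ge_max; case: sz => z0 _; case: sx => xp _.
by rewrite xp andbT lerBlDr lerDl.
Qed.

Lemma dpv_le_th i : dpv i 0 <= th.
Proof. by rewrite /th (bigD1 i) //= lerDl sumr_ge0 // => k _; apply: dpv_ge0. Qed.

Lemma th_le1 : th <= 1.
Proof. by case: sx => _ <-; apply: ler_sum => i _; apply: dpv_le_x. Qed.

Lemma ex_dpos : exists j, 0 < dpv j 0.
Proof.
apply/not_existsP => H.
have dp0 : forall i, dpv i 0 = 0.
  move=> i; apply/eqP; rewrite eq_le dpv_ge0 andbT leNgt; apply/negP => h.
  by apply: (H i).
have th0 : th = 0 by rewrite /th big1.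
have : \sum_i dnv i 0 = 0 by rewrite sum_dnv.
move/eqP; rewrite psumr_eq0; last by move=> i _; apply: dnv_ge0.
move/allP => dn0.
apply: xnZ; rewrite -hz; congr (Submission.hq _ _ _).
apply/eqP; rewrite -subr_eq0 xz_split; apply/eqP/matrixP => i j.
rewrite ord1 !mxE.
have := dn0 i (mem_index_enum _); rewrite mxE => /eqP ->.
by have := dp0 i; rewrite mxE => ->; rewrite subrr.
Qed.

Lemma th_gt0 : 0 < th.
Proof. by have [j hj] := ex_dpos; apply: lt_le_trans hj (dpv_le_th j). Qed.

Definition cc : 'cV[R]_n := th^-1 *: dnv.
Definition aa : 'cV[R]_n := th^-1 *: dpv.
Definition qq : 'cV[R]_(m + 1) := Ab *m cc.

Lemma simplex_cc : simplex n cc.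
Proof.
split; first by move=> i; rewrite /cc mxE; apply: mulr_ge0; [rewrite invr_ge0; exact: ltW th_gt0 | exact: dnv_ge0].
rewrite /cc; under eq_bigr do rewrite mxE.
by rewrite -mulr_sumr sum_dnv mulVf // gt_eqF // th_gt0.
Qed.

Lemma simplex_aa : simplex n aa.
Proof.
split; first by move=> i; rewrite /aa mxE; apply: mulr_ge0; [rewrite invr_ge0; exact: ltW th_gt0 | exact: dpv_ge0].
rewrite /aa; under eq_bigr do rewrite mxE.
by rewrite -mulr_sumr mulVf // gt_eqF // th_gt0.
Qed.

Lemma Fv_qq : Fv vv Ab qq.
Proof.
apply/(Fv_iff sx0 x0min); split; first by exists cc => //; apply: simplex_cc.
rewrite /qq Lv_Ab; congr (_ * _).
have [_ _ _ gdz] := Zs_prop sx0 x0min sz hz.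
apply/eqP; rewrite eq_le (gd_min sx0 x0min simplex_cc) andbT.
have zs : z = (z - dnv) + th *: cc.
  by rewrite /cc scalerA divff ?gt_eqF ?th_gt0 // scale1r subrK.
have h1 : (\sum_i (z - dnv) i 0) * gd x0 <= gd (z - dnv).
  by apply: gd_nonneg => // i; rewrite mxBE subr_ge0 dnv_le_z.
have s1 : \sum_i (z - dnv) i 0 = 1 - th.
  under eq_bigr do rewrite mxBE.
  by rewrite sumrB sum_dnv; case: sz => _ ->.
move: gdz; rewrite {1}zs gdD gdZ => e1.
rewrite s1 in h1.
have th0 := th_gt0.
have : th * gd cc <= th * gd x0 by nra.
by rewrite ler_pM2l.
Qed.


Lemma ev_entry k (j i : 'I_k) : (ev j : 'cV[R]_k) i 0 = (i == j)%:R.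
Proof. by rewrite /ev mxE eqxx andbT. Qed.

Lemma ev_ge0 k (j i : 'I_k) : 0 <= (ev j : 'cV[R]_k) i 0.
Proof. by rewrite ev_entry ler0n. Qed.

Lemma sum_ev k (j : 'I_k) : \sum_i (ev j : 'cV[R]_k) i 0 = 1.
Proof. by case: (@simplex_ev R k j). Qed.

Lemma vec_id1 (a q c : 'cV[R]_(m + 1)) s e : 0 < e ->
  a - s *: q + (s * (1 + e)^-1) *: (q + e *: (q - c)) + (s * (1 - (1 + e)^-1)) *: c = a.
Proof. by move=> e0; apply/matrixP => i k; rewrite !mxE; field; lra. Qed.

Lemma notG j : 0 < dpv j 0 -> ~ Gq P B qq (col j Ab).
Proof.
move=> dj [cj [e e0 [rho srho hrho]]].
set s := dpv j 0; set tht := (1 + e)^-1.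
have th0 := th_gt0.
have sth : s <= th by apply: dpv_le_th.
have tht0 : 0 < tht by rewrite invr_gt0; lra.
have tht1 : tht < 1 by rewrite invf_lt1; lra.
set z' := z - s *: cc + (s * tht) *: rho + (s * (1 - tht)) *: ev j.
have Abz' : Ab *m z' = Ab *m z.
  rewrite /z' !mulmxDr !mulmxN -!scalemxAr mul_ev -/qq -hrho.
  have -> : th^-1 *: (Ab *m dnv) = qq by rewrite /qq /cc scalemxAr.
  exact: vec_id1.
have sz' : simplex n z'.
  split.
    move=> i; rewrite /z' !(mxDE, mxNE, mxZE) /cc ?mxZE.
    have r0 : 0 <= rho i 0 by case: srho.
    have d1 := dnv_le_z i; have d2 := dnv_ge0 i; have e1 := ev_ge0 j i.
    have st1 : s * th^-1 <= 1 by rewrite ler_pdivrMr // mul1r.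
    have a1 : s * th^-1 * dnv i 0 <= dnv i 0 by rewrite ler_piMl.
    have a2 : 0 <= s * tht * rho i 0 by rewrite !mulr_ge0 // ltW.
    have a3 : 0 <= s * (1 - tht) * ev j i 0 by rewrite !mulr_ge0 // ?subr_ge0 ltW.
    rewrite !mulrA; lra.
  rewrite /z'; under eq_bigr do rewrite !(mxDE, mxNE, mxZE).
  rewrite !big_split /= sumrN -!mulr_sumr sum_ev sum_dnv.
  case: srho => _ ->; case: sz => _ ->.
  by rewrite mulVf ?gt_eqF // mulr1; ring.
have hz' : hq z' = hq x0 by rewrite (hq_Ab Abz') hz.
have := zmin sz' hz'.
rewrite norm1_xz sum_dnv.
have xz' : x - z' = (dpv - (s * (1 - tht)) *: ev j) + (- (1 - s / th)) *: dnv - (s * tht) *: rho.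
  have xz := xz_split; apply/matrixP => i k.
  have := congr1 (fun M : 'cV[R]_n => M i k) xz.
  rewrite /z' /cc !(mxDE, mxBE, mxZE, mxNE) => h.
  have -> : x i k = z i k + dpv i k - dnv i k by lra.
  by field; lra.
rewrite xz'.
have n1 : norm1 (dpv - (s * (1 - tht)) *: ev j) = th - s * (1 - tht).
  have nn : forall i, 0 <= (dpv - (s * (1 - tht)) *: ev j) i 0.
    move=> i; rewrite mxBE mxZE ev_entry.
    case: eqP => [->|_]; last by rewrite mulr0 subr0 dpv_ge0.
    rewrite mulr1 -/s (_ : s - s * (1 - tht) = s * tht); last by ring.
    by rewrite mulr_ge0 // ltW.
  rewrite norm1_nonneg //; under eq_bigr do rewrite mxBE mxZE.
  by rewrite sumrB -mulr_sumr sum_ev mulr1.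
have n2 : norm1 dnv = th by rewrite norm1_nonneg ?sum_dnv // => i; apply: dnv_ge0.
have n3 : norm1 rho = 1 by apply: norm1_simplex.
have := norm1D (dpv - (s * (1 - tht)) *: ev j + - (1 - s / th) *: dnv) (- ((s * tht) *: rho)).
have := norm1D (dpv - (s * (1 - tht)) *: ev j) (- (1 - s / th) *: dnv).
rewrite norm1N !norm1Z n1 n2 n3 normrN.
rewrite (ger0_norm (_ : 0 <= 1 - s / th)); last by rewrite subr_ge0 ler_pdivrMr // mul1r.
rewrite (ger0_norm (_ : 0 <= s * tht)); last by rewrite mulr_ge0 // ltW.
have -> : (1 - s / th) * th = th - s by field; lra.
move=> h1 h2 h3.
have : s * (1 - tht) > 0 by rewrite mulr_gt0 // subr_gt0.
lra.
Qed.

Lemma col_conv j : conv Ab (col j Ab).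
Proof. by exists (ev j); [apply: simplex_ev | rewrite mul_ev]. Qed.

Lemma G_adm : [/\ is_face (Fv vv Ab) (Gq P B qq), Gq P B qq <> set0 & Gq P B qq <> conv Ab].
Proof.
split.
- exact: (Gq_face sx0 x0min Fv_qq).
- move=> h; have : Gq P B qq qq by apply: Gq_q; case: Fv_qq.
  by rewrite h.
- move=> h; have [j dj] := ex_dpos; apply: (notG dj); rewrite h; apply: col_conv.
Qed.

Lemma aa_compl : conv_compl Ab (Gq P B qq) (Ab *m aa).
Proof.
exists aa => //; split; first exact: simplex_aa.
move=> i Gi; rewrite /aa mxZE.
have := dpv_ge0 i; rewrite le_eqVlt => /orP [/eqP <-|h]; first by rewrite mulr0.
by exfalso; apply: (notG h).
Qed.

Lemma distv_ge0 (v : 'cV[R]_m) (F G : set 'cV[R]_(m + 1)) : 0 <= distv v F G.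
Proof. by apply: inf_ge0 => r [w _ [w' _ ->]]; apply: normv_ge0. Qed.

Lemma Phi_ge0' (v : 'cV[R]_m) (M : 'M[R]_(m + 1, n)) : 0 <= Phi v M.
Proof. by apply: inf_ge0 => r [G _ ->]; apply: distv_ge0. Qed.

Lemma Phi_le : Phi vv Ab <= normv vv (qq - Ab *m aa).
Proof.
apply: (@le_trans _ _ (distv vv (Gq P B qq) (conv_compl Ab (Gq P B qq)))).
  apply: inf_le_elt; first by move=> r [G _ ->]; apply: distv_ge0.
  by exists (Gq P B qq) => //; apply: G_adm.
apply: inf_le_elt; first by move=> r [w _ [w' _ ->]]; apply: normv_ge0.
exists qq; first by apply: Gq_q; case: Fv_qq.
by exists (Ab *m aa) => //; apply: aa_compl.
Qed.

Lemma key_ineq : th * normv vv (qq - Ab *m aa) <= normv vv (Ab *m x - Ab *m z).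
Proof.
have -> : Ab *m x - Ab *m z = th *: (- (qq - Ab *m aa)).
  rewrite -mulmxBr xz_split /qq /aa /cc opprB scalerBr -!scalemxAr !scalerA.
  by rewrite divff ?gt_eqF ?th_gt0 // !scale1r mulmxBr.
apply: le_trans (normvZ _ _ _); first by rewrite normvN.
by rewrite (ltW th_gt0) th_le1.
Qed.

Lemma final_x : (th * Phi vv Ab) ^+ 2 <= 2%:R * (hq x - hq x0) /\ norm1 (x - z) = 2%:R * th.
Proof.
split; last by rewrite norm1_xz sum_dnv mulr2n mulrDl mul1r.
rewrite -(normv_key sx0 x0min sx sz hz).
have h0 : 0 <= th * Phi vv Ab by rewrite mulr_ge0 ?Phi_ge0' // ltW // th_gt0.
rewrite ler_sqr //; last by apply: normv_ge0.
apply: le_trans key_ineq.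
by rewrite ler_pM2l ?th_gt0 // Phi_le.
Qed.

End Constr.


Section Decomp.
Variable R : realType.
Variable n : nat.
Implicit Types x : 'cV[R]_n.

Lemma simplex_one x i : simplex n x -> x i 0 = 1 -> x = ev i.
Proof.
move=> [x0 x1] xi; apply/matrixP => j k; rewrite ord1 ev_entry.
case: eqP => [->//|/eqP ji].
have hs : \sum_(l | l != i) x l 0 = 0.
  by move: x1; rewrite (bigD1 i) //= xi => h; lra.
move: hs => /eqP; rewrite psumr_eq0; last by move=> l _; apply: x0.
by move/allP => /(_ j (mem_index_enum _)); rewrite ji /= => /eqP.
Qed.

Lemma simplex_decomp x i : simplex n x -> 0 < x i 0 < 1 ->
  exists2 x', simplex n x' &
    [/\ x = x i 0 *: ev i + (1 - x i 0) *: x', x' i 0 = 0 &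
        forall j, x' j 0 != 0 -> x j 0 != 0].
Proof.
move=> [x0 x1] /andP[xi0 xi1].
have d0 : 0 < 1 - x i 0 by rewrite subr_gt0.
set x' := (1 - x i 0)^-1 *: (x - x i 0 *: ev i).
have x'e : forall j, x' j 0 = (1 - x i 0)^-1 * (x j 0 - x i 0 * (j == i)%:R).
  by move=> j; rewrite /x' mxZE mxBE mxZE ev_entry.
exists x'.
  split.
    move=> j; rewrite x'e; apply: mulr_ge0; first by rewrite invr_ge0 ltW.
    by case: eqP => [->|_]; rewrite ?mulr1 ?subrr // mulr0 subr0 x0.
  rewrite /x'; under eq_bigr do rewrite mxZE mxBE mxZE.
  rewrite -mulr_sumr sumrB -mulr_sumr sum_ev x1 mulr1 mulVf //.
  by rewrite gt_eqF.
split.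
- apply/matrixP => j k; rewrite ord1 !(mxDE, mxZE, mxNE) ev_entry.
  by field; rewrite gt_eqF.
- by rewrite x'e eqxx mulr1 subrr mulr0.
- move=> j; rewrite x'e; have [->|ne] := eqVneq j i.
    by rewrite mulr1 subrr mulr0 eqxx.
  by rewrite mulr0 subr0 mulf_eq0 negb_or => /andP[].
Qed.

Lemma simplex_supp_nonempty x : simplex n x -> exists i, 0 < x i 0.
Proof.
move=> [x0 x1]; apply/not_existsP => H.
have : \sum_i x i 0 = 0.
  apply: big1 => i _; apply/eqP; rewrite eq_le x0 andbT leNgt; apply/negP => h.
  exact: (H i).
by rewrite x1 => /eqP; rewrite oner_eq0.
Qed.

End Decomp.

Lemma fin_eps (R : realType) (T : finType) (Q : T -> R -> Prop) :
  (forall t e e', Q t e -> 0 < e' -> e' <= e -> Q t e') ->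
  (forall t, exists2 e, 0 < e & Q t e) -> exists2 e, 0 < e & forall t, Q t e.
Proof.
move=> mono H.
suff : forall s : seq T, exists2 e, 0 < e & forall t, t \in s -> Q t e.
  by move=> /(_ (enum T)) [e e0 He]; exists e => // t; apply: He; rewrite mem_enum.
elim => [|t s [e e0 He]]; first by exists 1.
have [e1 e10 He1] := H t.
exists (Num.min e e1); first by rewrite lt_min e0 e10.
move=> u; rewrite in_cons => /orP [/eqP ->|us].
  by apply: mono He1 _ _; rewrite ?lt_min ?e0 ?e10 // ge_min lexx orbT.
by apply: mono (He u us) _ _; rewrite ?lt_min ?e0 ?e10 // ge_min lexx.
Qed.


Section PosFace.
Variables (R : realType) (m n : nat) (P : 'M[R]_(m, n)) (B : 'M[R]_(1, n)).
Variable x0 : 'cV[R]_n.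
Hypothesis sx0 : simplex n x0.
Hypothesis x0min : forall x, simplex n x -> hq P B x0 <= hq P B x.
Local Notation hq := (hq P B).
Local Notation Ab := (Ab P B).
Local Notation Lv := (Submission.Lv P x0).
Local Notation vv := (vv P x0).
Local Notation gd := (gd P B x0).

Definition DisjS (S : {set 'I_n}) := forall x x', simplex n x -> simplex n x' ->
  (forall i, i \notin S -> x i 0 = 0) -> (forall i, i \in S -> x' i 0 = 0) ->
  Ab *m x <> Ab *m x'.
Definition BoundS (S : {set 'I_n}) (e : R) := DisjS S -> forall x x', simplex n x -> simplex n x' ->
  (forall i, i \notin S -> x i 0 = 0) -> (forall i, i \in S -> x' i 0 = 0) ->
  e <= normv vv (Ab *m x - Ab *m x').

Variable G : set 'cV[R]_(m + 1).
Hypothesis hface : is_face (Fv vv Ab) G.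
Hypothesis hG0 : G <> set0.
Hypothesis hGc : G <> conv Ab.

Lemma Ab_decomp x x' (t : R) : Ab *m (t *: ev (n:=n) x + (1 - t) *: x') = t *: col x Ab + (1 - t) *: (Ab *m x').
Proof. by rewrite mulmxDr -!scalemxAr mul_ev. Qed.

Lemma face_supp y x : G y -> simplex n x -> y = Ab *m x -> forall i, 0 < x i 0 -> G (col i Ab).
Proof.
case: hface => sub cvx ext Gy sx yx i xi0.
have [xi1|xi1] := eqVneq (x i 0) 1.
  by move: Gy; rewrite yx (simplex_one sx xi1) mul_ev.
have xi1' : x i 0 < 1 by rewrite lt_neqAle xi1 simplex_le1.
have [x' sx' [xe x'i _]] := simplex_decomp sx (introT andP (conj xi0 xi1')).
have Fy := sub y Gy.
move/(Fv_iff sx0 x0min): (Fy) => [cy Ly].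
have ycomb : y = x i 0 *: col i Ab + (1 - x i 0) *: (Ab *m x').
  by rewrite yx {1}xe mulmxDr -!scalemxAr mul_ev.
have La : 2%:R * gd x0 <= Lv (col i Ab) by apply: Lv_conv => //; apply: col_conv.
have Lb : 2%:R * gd x0 <= Lv (Ab *m x') by apply: Lv_conv => //; exists x'.
have Ly' := Ly; rewrite ycomb LvD !LvZ in Ly'.
have Fa : Fv vv Ab (col i Ab).
  apply/(Fv_iff sx0 x0min); split; first by apply: col_conv.
  apply/eqP; rewrite eq_le La andbT.
  set a := Lv (col i Ab) in La Ly' *; set b := Lv (Ab *m x') in Lb Ly' *.
  set c := 2%:R * gd x0 in La Lb Ly' *.
  have : x i 0 * (a - c) <= 0 by nra.
  by rewrite pmulr_rle0 // subr_le0.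
have Fb : Fv vv Ab (Ab *m x').
  apply/(Fv_iff sx0 x0min); split; first by exists x'.
  apply/eqP; rewrite eq_le Lb andbT.
  set a := Lv (col i Ab) in La Ly' *; set b := Lv (Ab *m x') in Lb Ly' *.
  set c := 2%:R * gd x0 in La Lb Ly' *.
  have : (1 - x i 0) * (b - c) <= 0 by nra.
  by rewrite pmulr_rle0 ?subr_gt0 // subr_le0.
by have [] := ext _ _ _ Fa Fb xi0 xi1' (eq_ind _ G Gy _ ycomb).
Qed.

Lemma face_conv_supp x : simplex n x -> (forall i, x i 0 != 0 -> G (col i Ab)) -> G (Ab *m x).
Proof.
case: hface => sub cvx ext.
suff H : forall (k : nat) (x : 'cV[R]_n), leq #|(finset (fun i => x i 0 != 0))| k -> simplex n x ->
    (forall i, x i 0 != 0 -> G (col i Ab)) -> G (Ab *m x).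
  by move=> sx hx; apply: (H _ x (leqnn _)).
elim => [|k IH] {}x hk sx hx.
  have [i xi] := simplex_supp_nonempty sx.
  have : i \in (finset (fun i => x i 0 != 0)) by rewrite inE (gt_eqF xi).
  move=> iS; have h0 : leq 1 #|finset (fun i => x i 0 != 0)| by apply/card_gt0P; exists i.
  by move: hk; rewrite leqn0 => /eqP e; rewrite e in h0.
have [i xi0] := simplex_supp_nonempty sx.
have [xi1|xi1] := eqVneq (x i 0) 1.
  by rewrite (simplex_one sx xi1) mul_ev; apply: hx; rewrite xi1 oner_eq0.
have xi1' : x i 0 < 1 by rewrite lt_neqAle xi1 simplex_le1.
have [x' sx' [xe x'i x'supp]] := simplex_decomp sx (introT andP (conj xi0 xi1')).
rewrite xe Ab_decomp; apply: cvx.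
- by apply: hx; rewrite (gt_eqF xi0).
- apply: IH => //; last by move=> j /x'supp; apply: hx.
  have iS : i \in (finset (fun i => x i 0 != 0)) by rewrite inE (gt_eqF xi0).
  move: hk; rewrite (cardsD1 i) iS add1n ltnS => hk.
  apply: (leq_trans _ hk); apply: subset_leq_card; apply/fintype.subsetP => j.
  rewrite !inE => hj; rewrite (x'supp _ hj) andbT.
  by apply/eqP => ji; move: hj; rewrite ji x'i eqxx.
- exact: ltW.
- exact: ltW.
Qed.

Definition Sface : {set 'I_n} := finset (fun i => `[< G (col i Ab) >]).

Lemma Sface_in i : (i \in Sface) <-> G (col i Ab).
Proof. by rewrite inE; split => [/asboolP|h]; [|apply/asboolP]. Qed.

Lemma face_disj : DisjS Sface.
Proof.
move=> x x' sx sx' hx hx' E.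
have Gx : G (Ab *m x).
  apply: face_conv_supp => // i xi; apply/Sface_in.
  by apply: contraNT xi => /hx ->.
have [i xi] := simplex_supp_nonempty sx'.
have := face_supp (eq_ind _ G Gx _ E) sx' erefl xi.
move/Sface_in/hx' => h; by rewrite h ltxx in xi.
Qed.

Lemma face_notall : exists i, ~ G (col i Ab).
Proof.
apply/not_existsP => H; apply: hGc; apply/seteqP; split.
  by case: hface => sub _ _ y /sub [].
move=> y [x sx ->]; apply: face_conv_supp => // i _.
by have := H i; apply: contra_notP.
Qed.

Lemma distv_face e : (forall S, BoundS S e) -> e <= distv vv G (conv_compl Ab G).
Proof.
move=> HB; apply: lb_le_inf.
  have [w Gw] : exists w, G w.
    by apply/not_existsP => H; apply: hG0; apply/seteqP; split => // y /=; apply: H.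
  have [i ni] := face_notall.
  exists (normv vv (w - col i Ab)); exists w => //; exists (col i Ab) => //.
  exists (ev i); last by rewrite mul_ev.
  split; first by apply: simplex_ev.
  move=> k Gk; rewrite ev_entry; case: eqP => [ki|]; last by [].
  by exfalso; apply: ni; rewrite -ki.
move=> r [w Gw [w' [x' [sx' hx'] ->] ->]].
case: hface => sub _ _.
have [_ [x sx wx] _] : [/\ True, conv Ab w & True] by split => //; case: (sub w Gw).
rewrite wx; apply: (HB Sface face_disj) => //.
- move=> i iS; have : 0 <= x i 0 by case: sx.
  rewrite le_eqVlt => /orP [/eqP <- //|h].
  by exfalso; move/negP: iS; apply; apply/Sface_in; apply: (face_supp Gw sx wx h).
- by move=> i /Sface_in; apply: hx'.
Qed.

End PosFace.


Section Eps.
Variables (R : realType) (m n : nat) (P : 'M[R]_(m, n)) (B : 'M[R]_(1, n)).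
Variable x0 : 'cV[R]_n.
Local Notation Ab := (Ab P B).
Local Notation vv := (vv P x0).

Lemma normv_eq0 (w : 'cV[R]_(m + 1)) : normv vv w = 0 -> w = 0.
Proof.
move=> h; have h2 : normv vv w ^+ 2 = 0 by rewrite h expr0n.
rewrite normv_sq in h2.
have d0 := dotvvge0 (usubmx w).
have a0 : 0 <= `|Lv P x0 w| by [].
have du : dotv (usubmx w) (usubmx w) = 0 by lra.
have lw : `|Lv P x0 w| = 0 by lra.
have u0 := dotvv_eq0 du.
have lw0 : Lv P x0 w = 0 by apply/normr0_eq0.
have d0' : dsubmx w 0 0 = 0.
  by move: lw0; rewrite -[in Lv _ _ w](vsubmxK w) Lv_col u0 dotv0r add0r.
have dz : dsubmx w = 0 by apply/matrixP => i j; rewrite !ord1 d0' mxE.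
by rewrite -[w](vsubmxK w) u0 dz col_mx0.
Qed.


Definition Xl (y : 'rV[R]_(n + n)) : 'cV[R]_n := (lsubmx y)^T.
Definition Xr (y : 'rV[R]_(n + n)) : 'cV[R]_n := (rsubmx y)^T.
Lemma XlE y i : Xl y i 0 = y 0 (lshift n i). Proof. by rewrite /Xl !mxE. Qed.
Lemma XrE y i : Xr y i 0 = y 0 (rshift n i). Proof. by rewrite /Xr !mxE. Qed.

Definition KS (S : {set 'I_n}) (y : 'rV[R]_(n + n)) :=
  (forall i, 0 <= y 0 i) /\ \sum_i y 0 i = 2%:R /\
  `|\sum_i y 0 (lshift n i) - 1| + \sum_(i | i \notin S) y 0 (lshift n i)
     + \sum_(i | i \in S) y 0 (rshift n i) = 0.

Lemma KS_feas (S : {set 'I_n}) (x x' : 'cV[R]_n) : simplex n x -> simplex n x' ->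
  (forall i, i \notin S -> x i 0 = 0) -> (forall i, i \in S -> x' i 0 = 0) ->
  KS S (row_mx x^T x'^T).
Proof.
move=> [xp x1] [xp' x1'] hx hx'.
have El : forall i, row_mx x^T x'^T 0 (lshift n i) = x i 0 by move=> i; rewrite row_mxEl mxE.
have Er : forall i, row_mx x^T x'^T 0 (rshift n i) = x' i 0 by move=> i; rewrite row_mxEr mxE.
split.
  move=> j; rewrite -(splitK j); case: (split j) => k /=; by rewrite ?El ?Er.
split.
  rewrite big_split_ord /=; under eq_bigr do rewrite El; under [X in _ + X]eq_bigr do rewrite Er.
  by rewrite x1 x1'.
under eq_bigr do rewrite El; under [\sum_(i | i \notin S) _]eq_bigr do rewrite El.
under [\sum_(i | i \in S) _]eq_bigr do rewrite Er.
rewrite x1 subrr normr0 add0r big1 ?add0r; last by move=> i /hx.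
by rewrite big1 // => i /hx'.
Qed.

Lemma KS_extract (S : {set 'I_n}) y : KS S y ->
  [/\ simplex n (Xl y), simplex n (Xr y),
      (forall i, i \notin S -> Xl y i 0 = 0) & (forall i, i \in S -> Xr y i 0 = 0)].
Proof.
move=> [y0 [y2 yE]].
have s1 : 0 <= \sum_(i | i \notin S) y 0 (lshift n i) by apply: sumr_ge0.
have s2 : 0 <= \sum_(i | i \in S) y 0 (rshift n i) by apply: sumr_ge0.
have a0 := normr_ge0 (\sum_i y 0 (lshift n i) - 1).
have e1 : \sum_i y 0 (lshift n i) = 1.
  have : `|\sum_i y 0 (lshift n i) - 1| = 0 by lra.
  by move/normr0_eq0/eqP; rewrite subr_eq0 => /eqP.
have e2 : \sum_i y 0 (rshift n i) = 1.
  by move: y2; rewrite big_split_ord /= e1 => h; lra.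
have z1 : \sum_(i | i \notin S) y 0 (lshift n i) = 0 by lra.
have z2 : \sum_(i | i \in S) y 0 (rshift n i) = 0 by lra.
split.
- split; first by move=> i; rewrite XlE.
  by rewrite -e1; apply: eq_bigr => i _; rewrite XlE.
- split; first by move=> i; rewrite XrE.
  by rewrite -e2; apply: eq_bigr => i _; rewrite XrE.
- move=> i iS; rewrite XlE; move/eqP: z1; rewrite psumr_eq0 // => /allP.
  by move=> /(_ i (mem_index_enum _)); rewrite iS => /eqP.
- move=> i iS; rewrite XrE; move/eqP: z2; rewrite psumr_eq0 // => /allP.
  by move=> /(_ i (mem_index_enum _)); rewrite iS => /eqP.
Qed.

Lemma XlK (x x' : 'cV[R]_n) : Xl (row_mx x^T x'^T) = x.
Proof. by rewrite /Xl row_mxKl trmxK. Qed.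
Lemma XrK (x x' : 'cV[R]_n) : Xr (row_mx x^T x'^T) = x'.
Proof. by rewrite /Xr row_mxKr trmxK. Qed.

Definition cW (y : 'rV[R]_(n + n)) (k : 'I_(m + 1)) : R :=
  \sum_i Ab k i * (y 0 (lshift n i) - y 0 (rshift n i)).

Lemma ct_cW k : continuous (fun y => cW y k).
Proof.
apply: ct_sum => i; apply: ct_mul; first by apply: ct_cst.
by apply: ct_add; [apply: ct_coord | apply: ct_opp; apply: ct_coord].
Qed.

Lemma W_entry y k : (Ab *m (Xl y - Xr y)) k 0 = cW y k.
Proof. by rewrite mxE; apply: eq_bigr => i _; rewrite mxBE XlE XrE. Qed.

Definition phiS (y : 'rV[R]_(n + n)) : R := normv vv (Ab *m (Xl y - Xr y)) ^+ 2.

Lemma ct_phiS : continuous phiS.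
Proof.
have -> : phiS = fun y => \sum_k cW y (lshift 1 k) * cW y (lshift 1 k) +
     `|\sum_k (col_mx vv (1 : 'cV[R]_1)) k 0 * cW y k|.
  apply: funext => y; rewrite /phiS normv_sq /Submission.Lv /dotv; congr (_ + _).
    by apply: eq_bigr => k _; rewrite mxE W_entry.
  by congr Num.norm; apply: eq_bigr => k _; rewrite W_entry.
apply: ct_add.
  by apply: ct_sum => k; apply: ct_mul; apply: ct_cW.
by apply: ct_abs; apply: ct_sum => k; apply: ct_mul; [apply: ct_cst | apply: ct_cW].
Qed.

Lemma ct_ES (S : {set 'I_n}) : continuous (fun y : 'rV[R]_(n + n) =>
  `|\sum_i y 0 (lshift n i) - 1| + \sum_(i | i \notin S) y 0 (lshift n i)
     + \sum_(i | i \in S) y 0 (rshift n i)).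
Proof.
apply: ct_add; last by apply: ct_sum => i; apply: ct_coord.
apply: ct_add; last by apply: ct_sum => i; apply: ct_coord.
apply: ct_abs; apply: ct_add; last by apply: ct_cst.
by apply: ct_sum => i; apply: ct_coord.
Qed.

Lemma epsS (S : {set 'I_n}) : exists2 e, 0 < e & BoundS P B x0 S e.
Proof.
have [hD|hnD] := pselect (DisjS P B S); last by exists 1 => // /hnD.
have [hE|hne] := pselect (exists x x' : 'cV[R]_n, simplex n x /\ simplex n x' /\
  (forall i, i \notin S -> x i 0 = 0) /\ (forall i, i \in S -> x' i 0 = 0)); last first.
  exists 1 => // _ x x' sx sx' hx hx'.
  by exfalso; apply: hne; exists x, x'.
have [x1 [x1' [sx1 [sx1' [h1 h1']]]]] := hE.
have [ys [Kys ysmin]] := @ex_min_K R (n + n) 2%:R _ phiS (@ct_ES S) ct_phiS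
  (ex_intro _ _ (KS_feas sx1 sx1' h1 h1')).
have [sl sr hl hr] := KS_extract Kys.
set e := normv vv (Ab *m (Xl ys - Xr ys)).
have e0 : 0 < e.
  rewrite lt_def normv_ge0 andbT; apply/eqP => /normv_eq0 /eqP.
  rewrite mulmxBr subr_eq0 => /eqP; exact: hD.
exists e => // _ x x' sx sx' hx hx'.
have := ysmin _ (KS_feas sx sx' hx hx').
rewrite /phiS XlK XrK -/e => h.
by rewrite -mulmxBr -ler_sqr ?nnegrE ?normv_ge0.
Qed.

End Eps.


Section Final.
Variables (R : realType) (m n : nat) (P : 'M[R]_(m, n)) (B : 'M[R]_(1, n)).
Variable x0 : 'cV[R]_n.
Hypothesis sx0 : simplex n x0.
Hypothesis x0min : forall x, simplex n x -> hq P B x0 <= hq P B x.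
Local Notation hq := (hq P B).
Local Notation Ab := (Ab P B).
Local Notation vv := (vv P x0).

Lemma ex_zmin x : simplex n x -> exists z, (simplex n z /\ hq z = hq x0) /\
  forall z', simplex n z' -> hq z' = hq x0 -> norm1 (x - z) <= norm1 (x - z').
Proof.
move=> sx.
have cE : continuous (fun y : 'rV[R]_n => hq y^T - hq x0).
  by apply: ct_add; [apply: ct_hq | apply: ct_cst].
have cphi : continuous (fun y : 'rV[R]_n => norm1 (x - y^T)).
  have -> : (fun y : 'rV[R]_n => norm1 (x - y^T)) = (fun y => \sum_i `|x i 0 + - y 0 i|).
    by apply: funext => y; apply: eq_bigr => i _; rewrite !mxE.
  apply: ct_sum => i; apply: ct_abs; apply: ct_add; first by apply: ct_cst.
  by apply: ct_opp; apply: ct_coord.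
have [z [[sz Ez] zmin]] := @ex_min_simplex R n (fun z => hq z - hq x0) (fun z => norm1 (x - z)) cE cphi (ex_intro _ x0 (conj sx0 (subrr (hq x0)))).
exists z; split; first by split => //; apply/eqP; rewrite -subr_eq0 Ez.
by move=> z' sz' hz'; apply: zmin; split => //; rewrite hz' subrr.
Qed.

Lemma per_x x : simplex n x -> hq x <> hq x0 ->
  exists z, [/\ simplex n z, hq z = hq x0,
     (forall z', simplex n z' -> hq z' = hq x0 -> norm1 (x - z) <= norm1 (x - z')),
     exists G, [/\ is_face (Fv vv Ab) G, G <> set0 & G <> conv Ab] &
     (0 < th x z /\ (th x z * Phi vv Ab) ^+ 2 <= 2%:R * (hq x - hq x0) /\ norm1 (x - z) = 2%:R * th x z)].
Proof.
move=> sx hx; have [z [[sz hz] zmin]] := ex_zmin sx.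
exists z; split => //.
  by exists (Gq P B (qq P B x z)); apply: (G_adm sx0 x0min sx sz hz hx zmin).
split; first exact: (th_gt0 sx sz hz hx).
exact: (final_x sx0 x0min sx sz hz hx zmin).
Qed.

Lemma Phi_pos : (exists x, simplex n x /\ hq x <> hq x0) -> 0 < Phi vv Ab.
Proof.
move=> [x1 [sx1 hx1]].
have [e e0 He] := @fin_eps R _ (BoundS P B x0)
  (fun S e e' H e'0 le => fun hD x x' sx sx' hx hx' => le_trans le (H hD x x' sx sx' hx hx'))
  (fun S => epsS P B x0 S).
apply: (lt_le_trans e0); apply: lb_le_inf.
  have [z [_ _ _ [G [hf h0 hc]] _]] := per_x sx1 hx1.
  by exists (distv vv G (conv_compl Ab G)); exists G.
move=> r [G [hf h0 hc] ->].
exact: (distv_face sx0 x0min hf h0 hc He).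
Qed.

End Final.

Unset Implicit Arguments. Set Strict Implicit.


Theorem corollary4 (R : realType) (m n : nat) (A : 'M[R]_(m, n)) (b : 'cV[R]_m)
    (Q S : 'M[R]_m) :
  Q^T = Q -> (forall x : 'cV[R]_m, 0 <= dotv x (Q *m x)) ->
  S^T = S -> (forall x : 'cV[R]_m, 0 <= dotv x (S *m x)) -> S *m S = Q ->
  (exists i j, col i (col_mx (S *m A) (b^T *m A)) != col j (col_mx (S *m A) (b^T *m A))) ->
  exists v : 'cV[R]_m,
    (forall u, argmin (quadf Q b) (conv A) u -> 2%:R *: (S *m u) = v) /\
    (Phi v (col_mx (S *m A) (2%:R *: (b^T *m A)))) ^+ 2 / 4%:R <= mu_star (quadf Q b) A /\
    0 < Phi v (col_mx (S *m A) (2%:R *: (b^T *m A))).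
Proof.
move=> hQ hQpsd hS hSpsd hSS [i [j hij]].
have hf : forall x, quadf Q b (A *m x) = hq (S *m A) (b^T *m A) x.
  move=> x; rewrite /quadf /hq; congr (_ * _ + _).
    rewrite !dotvE; congr (_ 0 0).
    by rewrite -hSS !trmx_mul hS !mulmxA.
  by rewrite dotvE mulmxA.
set P := S *m A in hf hij *; set B := b^T *m A in hf hij *.
have -> : col_mx P (2%:R *: B) = Ab P B by [].
have [x0 [sx0 x0min]] := ex_min_hq P B (ex_intro _ _ (@simplex_ev R n i)).
exists (vv P x0).
have fstarE : fstar (quadf Q b) A = hq P B x0.
  rewrite /fstar; apply: inf_min; first by exists x0 => //; rewrite hf.
  by move=> r [x sx ->]; rewrite hf; apply: x0min.
have ZE : forall z, Zstar (quadf Q b) A z <-> simplex n z /\ hq P B z = hq P B x0.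
  by move=> z; rewrite /Zstar /= hf fstarE.
have hnot : exists x, simplex n x /\ hq P B x <> hq P B x0.
  case: (pselect (exists x, simplex n x /\ hq P B x <> hq P B x0)) => // H; exfalso.
  have allZ : forall x, simplex n x -> hq P B x = hq P B x0.
    move=> x sx; apply: contrapT => hx; apply: H; by exists x.
  have [Pi Bi _ _] := Zs_prop sx0 x0min (@simplex_ev R n i) (allZ _ (@simplex_ev R n i)).
  have [Pj Bj _ _] := Zs_prop sx0 x0min (@simplex_ev R n j) (allZ _ (@simplex_ev R n j)).
  move/negP: hij; apply.
  by rewrite -!mul_ev !mul_col_mx Pi Bi Pj Bj.
split.
  move=> u [[x' sx' ->] umin].
  have hle : hq P B x' <= hq P B x0.
    by rewrite -!hf; apply: umin; exists x0.
  have Px := hq_conv_le sx' sx0 x0min hle.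
  by rewrite /vv mulmxA -/P Px.
split; last exact: (Phi_pos sx0 x0min hnot).
rewrite /mu_star; apply: lb_le_inf.
  have [x1 [sx1 hx1]] := hnot.
  eexists; exists x1 => //; split => // /ZE [_ h]; exact: hx1 h.
move=> r [x [sx nZ] ->].
have hx : hq P B x <> hq P B x0 by move=> h; apply: nZ; apply/ZE.
have [z [sz hz zmin _ [th0 [ineq n1e]]]] := per_x sx0 x0min sx hx.
have dE : dist1 x (Zstar (quadf Q b) A) = norm1 (x - z).
  rewrite /dist1; apply: inf_min; first by exists z => //; apply/ZE.
  by move=> s [z' /ZE [sz' hz'] ->]; apply: zmin.
rewrite hf fstarE dE n1e.
set Ph := Phi _ _ in ineq *.
rewrite ler_pdivlMr; last by rewrite exprn_gt0 // mulr_gt0.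
have -> : Ph ^+ 2 / 4%:R * (2%:R * th x z) ^+ 2 = (th x z * Ph) ^+ 2.
  by field.
exact: ineq.
Qed.
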